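(* Let $\mathcal{A}^+=\{\mathcal{A}_1,\dots,\mathcal{A}_v\}$ be a finite collection and let $F:\mathcal{A}^+\to\mathbb{R}_{\ge 0}$ satisfy $c:=\sum_{u=1}^v F(\mathcal{A}_u)>0$. Let $\mathcal{A}^*\in\arg\max_{\mathcal{A}\in\mathcal{A}^+}F(\mathcal{A})$. Let $r$ be a positive integer with $r\ge \frac{c}{F(\mathcal{A}^* )}-1$. Form $\mathcal{R}$ as the set of elements obtained by $r$ independent draws from $\mathcal{A}^+$, each with distribution $\Pr(\mathcal{A})=\frac{1}{c}F(\mathcal{A})$. Let $\mathcal{A}'\in\arg\max_{\mathcal{A}\in\mathcal{R}}F(\mathcal{A})$. Then $$F(\mathcal{A}^* )-\mathbb{E}[F(\mathcal{A}')]\le\Bigl(\frac{r}{1+r}\Bigr)^{r}F(\mathcal{A}^* ).$$ *)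

(* Defs.v *)
From mathcomp Require Import all_boot all_order all_algebra.
Set Implicit Arguments. Unset Strict Implicit. Unset Printing Implicit Defensive.
Import Order.TTheory GRing.Theory Num.Theory.
Local Open Scope ring_scope.

(* The collection A^+ = {A_1,...,A_v} is indexed by 'I_v; F : 'I_v -> R.
   An outcome of r independent draws is s : {ffun 'I_r -> 'I_v}
   (s j = index of the j-th drawn element). *)

Definition draw_prob (R : realFieldType) (v r : nat) (F : 'I_v -> R)
  (s : {ffun 'I_r -> 'I_v}) : R :=
  \prod_(j < r) (F (s j) / \sum_(u < v) F u).

(* E[F(A')] where A' = A_(s (sel s)) is a chosen argmax over the drawn set. *)
Definition expected_best (R : realFieldType) (v r : nat) (F : 'I_v -> R)
  (sel : {ffun 'I_r -> 'I_v} -> 'I_r) : R :=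
  \sum_(s : {ffun 'I_r -> 'I_v}) draw_prob F s * F (s (sel s)).

(* Main.v *)
Require Import Defs.
From mathcomp Require Import all_boot all_order all_algebra.
From mathcomp Require Import ring lra.
Import Order.TTheory GRing.Theory Num.Theory.
Local Open Scope ring_scope.

Theorem theorem4 (R : realFieldType) (v : nat) (F : 'I_v -> R)
  (hF : forall u, 0 <= F u)
  (hc : 0 < \sum_(u < v) F u)
  (astar : 'I_v) (hastar : forall u, F u <= F astar)
  (r : nat) (hr : (0 < r)%N)
  (hrc : (\sum_(u < v) F u) / F astar - 1 <= r%:R)
  (sel : {ffun 'I_r -> 'I_v} -> 'I_r)
  (hsel : forall (s : {ffun 'I_r -> 'I_v}) (j : 'I_r), F (s j) <= F (s (sel s))) :
  F astar - expected_best F sel <= (r%:R / (1 + r%:R)) ^+ r * F astar.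
Proof.
set c := \sum_(u < v) F u in hc hrc *.
set M := F astar in hastar hrc *.
have cn0 : c != 0 by rewrite gt_eqF.
have hM0 : 0 <= M by apply: hF.
have hMc : M <= c.
  by rewrite /c (bigD1 astar) //= lerDl sumr_ge0.
have hMp : 0 < M.
  rewrite lt_def hM0 andbT; apply/eqP => M0.
  move: hc; rewrite /c big1 ?ltxx // => u _.
  by apply/eqP; rewrite eq_le hF andbT -M0 hastar.
pose g u := if u != astar then F u / c else 0.
have sum1 : \sum_(s : {ffun 'I_r -> 'I_v}) draw_prob F s = 1.
  rewrite /draw_prob -(bigA_distr_bigA (fun (j : 'I_r) u => F u / c)) /=.
  rewrite big1 // => j _; by rewrite -mulr_suml divff.
have sumg : \sum_(s : {ffun 'I_r -> 'I_v}) \prod_(j < r) g (s j)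
           = (1 - M / c) ^+ r.
  rewrite -(bigA_distr_bigA (fun (j : 'I_r) u => g u)) /= prodr_const card_ord.
  congr (_ ^+ _).
  rewrite (bigD1 astar) //= /g eqxx add0r.
  have hc' : c = M + \sum_(u < v | u != astar) F u by rewrite /c (bigD1 astar).
  rewrite (eq_bigr (fun u => F u / c)) => [|u ->] //.
  rewrite -mulr_suml; move: cn0; rewrite hc' => cn0'.
  by field.
have key : forall s : {ffun 'I_r -> 'I_v},
    draw_prob F s * (M - F (s (sel s))) <= M * \prod_(j < r) g (s j).
  move=> s.
  have dp0 : 0 <= draw_prob F s.
    by apply: prodr_ge0 => j _; apply: divr_ge0 => //; apply: ltW.
  have g0 : 0 <= \prod_(j < r) g (s j).
    apply: prodr_ge0 => j _; rewrite /g; case: ifP => // _.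
    by apply: divr_ge0 => //; apply: ltW.
  case: (boolP [exists j, s j == astar]).
    move/existsP=> [j /eqP sj].
    apply: (@le_trans _ _ 0); last by apply: mulr_ge0.
    apply: mulr_ge0_le0 => //; rewrite subr_le0 /M -sj; exact: hsel.
  rewrite negb_exists => /forallP hs.
  have -> : \prod_(j < r) g (s j) = draw_prob F s.
    by apply: eq_bigr => j _; rewrite /g hs.
  rewrite mulrC ler_wpM2r // lerBlDr lerDl; exact: hF.
have step1 : M - expected_best F sel
    = \sum_(s : {ffun 'I_r -> 'I_v}) draw_prob F s * (M - F (s (sel s))).
  rewrite /expected_best -[M in M - _]mul1r -sum1 mulr_suml -sumrB.
  by apply: eq_bigr => s _; rewrite mulrBr.
rewrite step1 mulrC.
apply: (le_trans (ler_sum _ (fun s _ => key s))).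
rewrite -mulr_sumr sumg ler_wpM2l //.
have cM : c <= M * (1 + r%:R).
  have : c / M <= 1 + r%:R by lra.
  by rewrite ler_pdivrMr // mulrC.
apply: lerXn2r.
- rewrite nnegrE subr_ge0 ler_pdivrMr // mul1r //.
- by rewrite nnegrE divr_ge0 // ltW // ltr_pwDl.
have r1 : 0 < 1 + r%:R :> R by rewrite ltr_pwDr // ltr0n.
have r1' : 1 + r%:R != 0 :> R by rewrite gt_eqF.
have e1 : r%:R/(1+r%:R) = 1 - 1/(1+r%:R) :> R by field.
rewrite e1 lerD2l lerN2 ler_pdivrMr // mulrAC ler_pdivlMr // mul1r.
exact: cM.
Qed.
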